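(* Let $\gamma\in[0,1)$ and let $\tau=(s_k,a_k,r_k,s_{k+1})_{k=1,\dots,T}$ be a (possibly random) trajectory of finite length $T$ in an MDP, with real rewards $r_k$. Let $Q^\pi:\mathcal S\times\mathcal A\to\mathbb R$ be a fixed function (the action-value function of a policy $\pi$). For $i\in\{1,2\}$ and $k\in\{1,\dots,T\}$ let $$\tilde Q^{(i)}(s_k,a_k)=Q^\pi(s_k,a_k)+\epsilon^{(i)}_k ,$$ where, conditionally on $\tau$, the noise terms are integrable with $\mathbb E[\epsilon^{(i)}_k\mid\tau]=0$, and the family $(\epsilon^{(1)}_k)_k$ is independent of the family $(\epsilon^{(2)}_k)_k$. Set $\tilde Q^{(i)}(s_k,a_k)=0$ for $k>T$. For a fixed $t\in\{1,\dots,T\}$ define recursively, for $i\in\{1,2\}$ and integers $k\ge t$, $h\ge 0$, $$V^{(i)}_{k,h}=\begin{cases} r_k+\gamma V^{(i)}_{k+1,h-1}, & h>0,\\ \tilde Q^{(i)}(s_k,a_k), & h=0,\end{cases}$$ with the convention $r_k=0$ and $V^{(i)}_{k,h}=0$ for $k>T$. Let $h^*_{(i)}\in\arg\max_{h>0}V^{(i)}_{t,h}$ (chosen by any fixed tie-breaking rule, as a function of $(V^{(i)}_{t,h})_h$ only), and, writing $j$ for the index in $\{1,2\}$ different from $i$, set $R^{(i)}_t=V^{(j)}_{t,h^*_{(i)}}$. For $0\le h\le T-t$ define $$Q^\pi_{t,h}=\sum_{l=0}^{h}\gamma^l r_{t+l}+\begin{cases}\gamma^{h+1}Q^\pi(s_{t+h+1},a_{t+h+1}),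 & h<T-t,\\ 0, & h=T-t.\end{cases}$$ Then for each $i\in\{1,2\}$, $$\mathbb E_{\tau,\epsilon}\big[R^{(i)}_t\big]\le \mathbb E_\tau\Big[\max_{0\le h\le T-t}Q^\pi_{t,h}\Big].$$
   Context: This is the ''twin back-propagation'' estimate: one estimator ($i$) selects the rollout length with maximal value, and the other estimator ($j$) evaluates the return along that rollout. Expectations are assumed finite. *)

(* Defs.v *)
From HB Require Import structures.
From mathcomp Require Import all_boot all_order all_algebra.
From mathcomp Require Import all_classical all_reals all_analysis.
Set Implicit Arguments. Unset Strict Implicit. Unset Printing Implicit Defensive.
Import Order.TTheory GRing.Theory Num.Theory.
Local Open Scope ring_scope.

Fixpoint Vrec {R : realType} (T : nat) (g : R) (r Qt : nat -> R) (k h : nat) : R :=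
  match h with
  | 0 => if (k <= T)%N then Qt k else 0
  | h'.+1 => if (k <= T)%N then r k + g * Vrec T g r Qt k.+1 h' else 0
  end.

Definition Qtilde {R : realType} (T : nat) (Qsa eps : nat -> R) (k : nat) : R :=
  if (1 <= k <= T)%N then Qsa k + eps k else 0.

Definition Qpi_th {R : realType} (T : nat) (g : R) (r Qsa : nat -> R) (t h : nat) : R :=
  \sum_(0 <= l < h.+1) g ^+ l * r (t + l)%N
  + (if (h < T - t)%N then g ^+ h.+1 * Qsa (t + h).+1 else 0).

Definition maxQpi {R : realType} (T : nat) (g : R) (r Qsa : nat -> R) (t : nat) : R :=
  \big[Num.max/Qpi_th T g r Qsa t 0]_(h < (T - t).+1) Qpi_th T g r Qsa t h.

Definition argmax_pos_rule {R : realType} (sel : (nat -> R) -> nat) : Prop :=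
  forall v : nat -> R,
    (exists m, (0 < m)%N /\ forall h, (0 < h)%N -> v h <= v m) ->
    (0 < sel v)%N /\ forall h, (0 < h)%N -> v h <= v (sel v).

(* Main.v *)
Require Import Defs.
From HB Require Import structures.
From mathcomp Require Import all_boot all_order all_algebra.
From mathcomp Require Import all_classical all_reals all_analysis.
From mathcomp Require Import zify ring lra.
From mathcomp Require Import measurable_realfun.
Import Order.TTheory GRing.Theory Num.Theory.
Local Open Scope ring_scope.

Local Open Scope classical_set_scope.
Lemma Vrec_formula (R : realType) T (g:R) rr Qt k h :
  (forall j, (T < j)%N -> rr j = 0) ->
  Vrec T g rr Qt k h = \sum_(0 <= l < h) g^+l * rr (k+l)%N
     + (if (k+h <= T)%N then g^+h * Qt (k+h)%N else 0).
Proof.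
move=> rr0; elim: h k => [|h IH] k /=.
  by rewrite big_geq // add0r addn0 expr0 mul1r.
rewrite IH big_nat_recl // expr0 mul1r addn0.
case: ifP => kT.
  rewrite mulrDr mulr_sumr addrA; congr (_ + _ + _).

    apply: eq_bigr => l _ /=. rewrite mulrA -exprS; congr (_ * rr _); lia.
  rewrite (_ : (k.+1 + h = k + h.+1)%N); last lia.
  by case: ifP => _ //; rewrite ?mulr0 // mulrA -exprS.
have kT' : (T < k)%N by rewrite ltnNge kT.
rewrite rr0 // add0r big1 ?add0r; last by move=> l _; rewrite rr0 ?mulr0 //; lia.
by rewrite ifF //; lia.
Qed.

Lemma le_bigmax_ord (R : realType) n (F : nat -> R) x0 i : (i < n)%N ->
  F i <= \big[Num.max/x0]_(h < n) F h.
Proof.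
elim: n F i => [//|n IH] F i lt; rewrite big_ord_recl /= le_max.
case: i lt => [|i] lt; first by rewrite lexx.
apply/orP; right.
have -> : \big[Num.max/x0]_(h < n) F (lift ord0 h) = \big[Num.max/x0]_(h < n) F h.+1.
  by apply: eq_bigr => h _; rewrite lift0.
by apply: (IH (fun h => F h.+1)).
Qed.

Lemma argmax_ex (R : realType) (f : nat -> R) n : (0 < n)%N ->
  (forall h, (n <= h)%N -> f h = f n) ->
  exists m, (0 < m)%N /\ forall h, (0 < h)%N -> f h <= f m.
Proof.
move=> n0 fc.
have : exists m, [/\ (0 < m)%N, (m <= n)%N & forall h, (0 < h)%N -> (h <= n)%N -> f h <= f m].
  elim: n n0 {fc} => [//|n IH] _.
  case: (posnP n) => [->|np].
    exists 1%N; split => // h h0 h1; have -> : h = 1%N by lia. by [].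
  have [m [m0 mn mm]] := IH np.
  case: (lerP (f n.+1) (f m)) => c.
    exists m; split => //; first lia. move=> h h0 h1.
    case: (ltngtP h n.+1) h1 => // [hl _|-> _] //; apply: mm => //.
  exists n.+1; split => // h h0 h1.
    case: (ltngtP h n.+1) h1 => // [hl _|-> _] //.
  apply: le_trans (ltW c); apply: mm => //.
move=> [m [m0 mn mm]]; exists m; split => // h h0.
case: (leqP h n) => hn; first exact: mm.
by rewrite fc ?(ltnW hn) // mm.
Qed.
Lemma int_cst_prob (R : realType) d (Om : measurableType d) (P : probability Om R) (C : R) :
  (\int[P]_w C%:E = C%:E)%E.
Proof. rewrite integral_cst //; transitivity (C%:E * 1)%E; last by rewrite mule1.
by congr (_ * _)%E; exact: probability_setT. Qed.

Lemma int_lin (R : realType) d (Om : measurableType d) (P : probability Om R) (C D : R) (e : Om -> R) :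
  P.-integrable setT (fun w => (e w)%:E) -> (\int[P]_w (e w)%:E = 0)%E ->
  (\int[P]_w (C + D * e w)%:E = C%:E)%E.
Proof.
move=> ie e0.
under eq_integral do rewrite EFinD EFinM.
rewrite integralD //; last first.
- exact: integrableZl.
- exact: finite_measure_integrable_cst.
by rewrite integralZl // e0 mule0 adde0 int_cst_prob.
Qed.

Lemma prod_le1 (R : realType) d1 d2 (T1 : measurableType d1) (T2 : measurableType d2)
  (m1 : probability T1 R) (m2 : probability T2 R) (f : T1 * T2 -> \bar R) (B : R) :
  (m1 \x m2)%E.-integrable setT f -> (forall x, \int[m2]_y f (x, y) <= B%:E)%E ->
  (\int[(m1 \x m2)%E]_z f z <= B%:E)%E.
Proof.
move=> imf H; rewrite -integral12_prod_meas1 //.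
rewrite -(@int_cst_prob _ _ _ m1 B).
apply: le_integral => //.
- exact: integrable_fubini_F.
- exact: finite_measure_integrable_cst.
- by move=> x _; apply: H.
Qed.

Lemma le_integral_m (R : realType) d (T : measurableType d) (mu : {measure set T -> \bar R})
  (f g : T -> \bar R) : measurable_fun [set: T] f -> measurable_fun [set: T] g ->
  (forall x, f x <= g x)%E -> (\int[mu]_x f x <= \int[mu]_x g x)%E.
Proof.
move=> mf mg fg; rewrite integralE [leRHS]integralE leeB//.
- apply: ge0_le_integral => //.
  + exact: measurable_funepos.
  + exact: measurable_funepos.
  + by move=> x _; apply: (@funepos_le _ _ setT); [move=> y _; apply: fg|rewrite in_setT].
- apply: ge0_le_integral => //.
  + exact: measurable_funeneg.
  + exact: measurable_funeneg.
  + by move=> x _; apply: (@funeneg_le _ _ setT); [move=> y _; apply: fg|rewrite in_setT].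
Qed.

Lemma prod_le2 (R : realType) d1 d2 (T1 : measurableType d1) (T2 : measurableType d2)
  (m1 : probability T1 R) (m2 : probability T2 R) (f : T1 * T2 -> \bar R) (B : R) :
  (m1 \x m2)%E.-integrable setT f -> (forall y, \int[m1]_x f (x, y) <= B%:E)%E ->
  (\int[(m1 \x m2)%E]_z f z <= B%:E)%E.
Proof.
move=> imf H; rewrite -integral21_prod_meas1 //.
rewrite -(@int_cst_prob _ _ _ m2 B).
apply: le_integral_m => //.
- exact: (measurable_fubini_G imf).
Qed.

Definition Cv {R : realType} T (g : R) (rr Qsa : nat -> R) t h :=
  \sum_(0 <= l < h) g^+l * rr (t+l)%N + (if (t+h <= T)%N then g^+h * Qsa (t+h)%N else 0).

Lemma V_split (R : realType) T (g : R) rr Qsa (eps : nat -> R) t h :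
  (1 <= t)%N -> (forall j, (T < j)%N -> rr j = 0) ->
  Vrec T g rr (Qtilde T Qsa eps) t h =
  Cv T g rr Qsa t h + (if (t+h <= T)%N then g^+h * eps (t+h)%N else 0).
Proof.
move=> t1 rr0; rewrite Vrec_formula // /Cv /Qtilde.
case: ifP => th; last by rewrite !addr0.
rewrite ifT; last by apply/andP; split => //; lia.
by rewrite mulrDr addrA.
Qed.

Lemma Cv_tail (R : realType) T (g : R) rr Qsa t h :
  (t <= T)%N -> (forall j, (T < j)%N -> rr j = 0) -> ((T - t).+1 <= h)%N ->
  Cv T g rr Qsa t h = \sum_(0 <= l < (T - t).+1) g^+l * rr (t+l)%N.
Proof.
move=> tT rr0 hn; rewrite /Cv ifF; last by apply/negbTE; rewrite -ltnNge; lia.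
rewrite addr0 (@big_cat_nat _ _ _ (T - t).+1) //=.
rewrite [X in _ + X = _]big_nat_cond [X in _ + X = _]big1 ?addr0 // => l /andP[/andP[l1 l2] _].
by rewrite rr0 ?mulr0 //; lia.
Qed.

Lemma Cv_le (R : realType) T (g : R) rr Qsa t h :
  (0 < h)%N -> (1 <= t <= T)%N -> (forall j, (T < j)%N -> rr j = 0) ->
  Cv T g rr Qsa t h <= maxQpi T g rr Qsa t.
Proof.
move=> h0 /andP[t1 tT] rr0; rewrite /maxQpi.
case: (leqP (t + h) T) => th.
  case: h h0 th => [//|h] _ th.
  apply: le_trans (@le_bigmax_ord _ (T - t).+1 (Qpi_th T g rr Qsa t) _ h _); last by lia.
  have E : (t + h).+1 = (t + h.+1)%N by exact: (esym (addnS t h)).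
  rewrite /Qpi_th /Cv E (ifT _ _ th) ifT; [exact: lexx|lia].
rewrite (@Cv_tail R T g rr Qsa t h) //; last by lia.
apply: le_trans (@le_bigmax_ord _ (T - t).+1 (Qpi_th T g rr Qsa t) _ (T - t) _); last by lia.
by rewrite /Qpi_th ifF ?addr0 ?ltnn.
Qed.

Lemma sel_pos (R : realType) T (g : R) rr Qsa (eps : nat -> R) t sel :
  (1 <= t <= T)%N -> (forall j, (T < j)%N -> rr j = 0) -> argmax_pos_rule sel ->
  (0 < sel (fun h => Vrec T g rr (Qtilde T Qsa eps) t h))%N.
Proof.
move=> /andP[t1 tT] rr0 Hsel; apply: (fun H => (Hsel _ H).1).
apply: (@argmax_ex _ _ (T - t).+1) => // h hn.
rewrite !V_split // !Cv_tail // ?leqnn // ifF; last by apply/negbTE; rewrite -ltnNge; lia.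
by rewrite ifF //; apply/negbTE; rewrite -ltnNge; lia.
Qed.

Lemma inner_int (R : realType) d (Om : measurableType d) (P : probability Om R) T (g : R) rr Qsa
  (eps : nat -> Om -> R) t h :
  (1 <= t)%N -> (forall j, (T < j)%N -> rr j = 0) ->
  (forall k, (1 <= k <= T)%N ->
     P.-integrable setT (fun w => (eps k w)%:E) /\ (\int[P]_w (eps k w)%:E = 0)%E) ->
  (\int[P]_w (Vrec T g rr (Qtilde T Qsa (fun k => eps k w)) t h)%:E
     = (Cv T g rr Qsa t h)%:E)%E.
Proof.
move=> t1 rr0 He.
under eq_integral do rewrite V_split //.
case: (leqP (t + h) T) => th.
  have [ie e0] := He (t + h)%N ltac:(apply/andP; split => //; lia).
  exact: int_lin.
under eq_integral do rewrite addr0.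
exact: int_cst_prob.
Qed.

Theorem theorem1 (R : realType) (S A : Type) (Q : S -> A -> R)
  (g : R) (T t : nat)
  (d0 d1 d2 : measure_display)
  (Om0 : measurableType d0) (Om1 : measurableType d1) (Om2 : measurableType d2)
  (P0 : probability Om0 R)
  (P1 : Om0 -> probability Om1 R) (P2 : Om0 -> probability Om2 R)
  (s : nat -> Om0 -> S) (a : nat -> Om0 -> A) (r : nat -> Om0 -> R)
  (eps1 : nat -> Om0 -> Om1 -> R) (eps2 : nat -> Om0 -> Om2 -> R)
  (sel : (nat -> R) -> nat) :
  0 <= g < 1 ->
  (1 <= t <= T)%N ->
  (forall k tau, (1 <= k <= T)%N ->
     (P1 tau).-integrable setT (fun w => (eps1 k tau w)%:E) /\
     (\int[P1 tau]_w (eps1 k tau w)%:E = 0)%E) ->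
  (forall k tau, (1 <= k <= T)%N ->
     (P2 tau).-integrable setT (fun w => (eps2 k tau w)%:E) /\
     (\int[P2 tau]_w (eps2 k tau w)%:E = 0)%E) ->
  argmax_pos_rule sel ->
  let rr tau k := if (1 <= k <= T)%N then r k tau else 0 in
  let Qsa tau k := Q (s k tau) (a k tau) in
  let V1 tau w1 h := Vrec T g (rr tau) (Qtilde T (Qsa tau) (fun k => eps1 k tau w1)) t h in
  let V2 tau w2 h := Vrec T g (rr tau) (Qtilde T (Qsa tau) (fun k => eps2 k tau w2)) t h in
  let R1 tau (w : Om1 * Om2) := V2 tau w.2 (sel (V1 tau w.1)) in
  let R2 tau (w : Om1 * Om2) := V1 tau w.1 (sel (V2 tau w.2)) in
  let M tau := maxQpi T g (rr tau) (Qsa tau) t in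
  (forall tau, (P1 tau \x P2 tau)%E.-integrable setT (fun w => (R1 tau w)%:E)) ->
  (forall tau, (P1 tau \x P2 tau)%E.-integrable setT (fun w => (R2 tau w)%:E)) ->
  P0.-integrable setT (fun tau => \int[(P1 tau \x P2 tau)%E]_w (R1 tau w)%:E)%E ->
  P0.-integrable setT (fun tau => \int[(P1 tau \x P2 tau)%E]_w (R2 tau w)%:E)%E ->
  P0.-integrable setT (fun tau => (M tau)%:E) ->
  (\int[P0]_tau (\int[(P1 tau \x P2 tau)%E]_w (R1 tau w)%:E)
     <= \int[P0]_tau (M tau)%:E)%E /\
  (\int[P0]_tau (\int[(P1 tau \x P2 tau)%E]_w (R2 tau w)%:E)
     <= \int[P0]_tau (M tau)%:E)%E.
Proof.
move=> /andP[g0 g1] /andP[t1 tT] Heps1 Heps2 Hsel rr Qsa V1 V2 R1 R2 M iR1 iR2 iE1 iE2 iM.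
have rr0 : forall tau j, (T < j)%N -> rr tau j = 0.
  by move=> tau j jT; rewrite /rr ifF //; apply/negbTE; apply/negP => /andP[_ ?]; lia.
have tT' : (1 <= t <= T)%N by rewrite t1 tT.
split.
- apply: le_integral => // tau _.
  apply: prod_le1 => // w1.
  rewrite /R1 /V2 /=.
  rewrite (@inner_int R _ _ (P2 tau) T g (rr tau) (Qsa tau) (fun k w => eps2 k tau w) t _ t1
    (rr0 tau) (fun k kT => Heps2 k tau kT)).
  rewrite lee_fin; apply: Cv_le => //; last exact: rr0.
  exact: (@sel_pos R T g (rr tau) (Qsa tau) (fun k => eps1 k tau w1) t sel tT' (rr0 tau) Hsel).
- apply: le_integral => // tau _.
  apply: prod_le2 => // w2.
  rewrite /R2 /V1 /=.
  rewrite (@inner_int R _ _ (P1 tau) T g (rr tau) (Qsa tau) (fun k w => eps1 k tau w) t _ t1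
    (rr0 tau) (fun k kT => Heps1 k tau kT)).
  rewrite lee_fin; apply: Cv_le => //; last exact: rr0.
  exact: (@sel_pos R T g (rr tau) (Qsa tau) (fun k => eps2 k tau w2) t sel tT' (rr0 tau) Hsel).
Qed.
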